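(* Let $\lambda_1,\lambda_2,\sigma_1,\sigma_2\in\mathbb{C}^*$ and $\eta_1,\eta_2\in\mathbb{C}$. Suppose that $V$ is a nonzero $\mathcal{G}$-submodule of the tensor product module $\Omega(\lambda_1,\eta_1,\sigma_1,0)\otimes\Omega(\lambda_2,\eta_2,0,\sigma_2)$. Then $1\otimes 1\in V$.
   Context: The planar Galilean conformal algebra $\mathcal{G}$ is the complex Lie algebra with basis $\{L_m,H_m,I_m,J_m\mid m\in\mathbb{Z}\}$ and brackets $[L_m,L_n]=(n-m)L_{m+n}$, $[L_m,H_n]=nH_{m+n}$, $[L_m,I_n]=(n-m)I_{m+n}$, $[L_m,J_n]=(n-m)J_{m+n}$, $[H_m,I_n]=I_{m+n}$, $[H_m,J_n]=-J_{m+n}$, and $[H_m,H_n]=[I_m,I_n]=[J_m,J_n]=[I_m,J_n]=0$ for all $m,n\in\mathbb{Z}$. For $\lambda,\sigma\in\mathbb{C}^*$, $\eta\in\mathbb{C}$, the module $\Omega(\lambda,\eta,\sigma,0)$ is $\mathbb{C}[X,Y]$ with $L_m f(X,Y)=\lambda^m(Y-mX+m\eta)f(X,Y-m)$, $H_m f(X,Y)=\lambda^m X f(X,Y-m)$, $I_m f(X,Y)=\lambda^m\sigma f(X-1,Y-m)$, $J_m f(X,Y)=0$. The module $\Omega(\lambda,\eta,0,\sigma)$ is $\mathbb{C}[S,T]$ with $L_m f(S,T)=\lambda^m(T+mS+m\eta)f(S,T-m)$, $H_m f(S,T)=\lambda^m S f(S,T-m)$, $I_m f(S,T)=0$, $J_m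 f(S,T)=\lambda^m\sigma f(S+1,T-m)$. The tensor product of $\mathcal{G}$-modules has action $x(v\otimes w)=xv\otimes w+v\otimes xw$. *)

(* Defs.v *)
From HB Require Import structures.
From mathcomp Require Import all_boot all_order all_algebra.
From mathcomp Require Import Rstruct.
From mathcomp Require Import complex.
From mathcomp Require Import mpoly.
Set Implicit Arguments. Unset Strict Implicit. Unset Printing Implicit Defensive.
Import Order.TTheory GRing.Theory Num.Theory.
Local Open Scope ring_scope.

Definition CC : numClosedFieldType := (Rdefinitions.R)[i]%C.

(* The tensor product C[X,Y] (x) C[S,T] is identified with C[X,Y,S,T]
   via f(X,Y) (x) g(S,T) |-> f(X,Y) g(S,T).
   Variables: index 0 = X, 1 = Y, 2 = S, 3 = T. *)
Definition TP := {mpoly CC[4]}.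

Definition vX : TP := 'X_(@inord 3 0).
Definition vY : TP := 'X_(@inord 3 1).
Definition vS : TP := 'X_(@inord 3 2).
Definition vT : TP := 'X_(@inord 3 3).

Definition shift (a b c d : CC) (F : TP) : TP :=
  comp_mpoly [tuple vX + a%:MP; vY + b%:MP; vS + c%:MP; vT + d%:MP] F.

Definition zc (m : int) : CC := m%:~R.

(* Action of the generators of the planar Galilean conformal algebra on
   Omega(l1,e1,s1,0) (x) Omega(l2,e2,0,s2), extended linearly:
   x (f (x) g) = x f (x) g + f (x) x g. *)
Definition actL (l1 e1 l2 e2 : CC) (m : int) (F : TP) : TP :=
  (l1 ^ m) *: ((vY - zc m *: vX + (zc m * e1)%:MP) * shift 0 (- zc m) 0 0 F)
  + (l2 ^ m) *: ((vT + zc m *: vS + (zc m * e2)%:MP) * shift 0 0 0 (- zc m) F).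

Definition actH (l1 l2 : CC) (m : int) (F : TP) : TP :=
  (l1 ^ m) *: (vX * shift 0 (- zc m) 0 0 F)
  + (l2 ^ m) *: (vS * shift 0 0 0 (- zc m) F).

(* I_m acts by l1^m s1 f(X-1,Y-m) on the first factor and by 0 on the second. *)
Definition actI (l1 s1 : CC) (m : int) (F : TP) : TP :=
  (l1 ^ m * s1) *: shift (-1) (- zc m) 0 0 F + 0.

(* J_m acts by 0 on the first factor and by l2^m s2 g(S+1,T-m) on the second. *)
Definition actJ (l2 s2 : CC) (m : int) (F : TP) : TP :=
  0 + (l2 ^ m * s2) *: shift 0 0 1 (- zc m) F.

Definition is_submodule (l1 e1 s1 l2 e2 s2 : CC) (V : TP -> Prop) : Prop :=
  [/\ V 0,
      (forall u v, V u -> V v -> V (u + v)) &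
      (forall (c : CC) v, V v -> V (c *: v))] /\
  [/\ (forall m v, V v -> V (actL l1 e1 l2 e2 m v)),
      (forall m v, V v -> V (actH l1 l2 m v)),
      (forall m v, V v -> V (actI l1 s1 m v)) &
      (forall m v, V v -> V (actJ l2 s2 m v))].

(* Main.v *)
Require Import Defs.
From HB Require Import structures.
From mathcomp Require Import all_boot all_order all_algebra.
From mathcomp Require Import Rstruct complex mpoly.
From mathcomp Require Import ring zify.
Set Implicit Arguments. Unset Strict Implicit. Unset Printing Implicit Defensive.
Import Order.TTheory GRing.Theory Num.Theory.
Local Open Scope ring_scope.

Definition lq (a : 'I_4 -> CC) : 4.-tuple TP := [tuple 'X_i + (a i)%:MP | i < 4].
Definition tau a (F : TP) : TP := F \mPo lq a.
Definition dlt a (F : TP) : TP := \sum_(j < 4) a j *: mderiv j F.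
Definition EE a (F : TP) : TP := tau a F - F - dlt a F.
Definition sh (a b c d : CC) : 'I_4 -> CC := fun i => nth 0 [:: a; b; c; d] i.

Lemma tauX a i : tau a 'X_i = 'X_i + (a i)%:MP.
Proof. by rewrite /tau comp_mpolyXU -tnth_nth tnth_mktuple. Qed.

Lemma tauM a : {morph tau a : x y / x * y}.
Proof. by move=> x y; rewrite /tau rmorphM. Qed.

Lemma mderivXi (i j : 'I_4) : mderiv j ('X_i : TP) = (i == j)%:R%:MP.
Proof.
rewrite mderivX mnm1E; case: eqP => [->|_].
  have ->: (U_(j) - U_(j) = 0)%MM by apply/mnmP => k; rewrite mnmBE subnn mnm0E.
  by rewrite mpolyX0 scale1r.
by rewrite scale0r.
Qed.
Lemma dltMX a (F : TP) (i : 'I_4) : dlt a (F * 'X_i) = dlt a F * 'X_i + a i *: F.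
Proof.
rewrite /dlt.
under eq_bigr => j _ do rewrite mderivM mderivXi scalerDr.
rewrite big_split /= mulr_suml; congr (_ + _).
  by apply: eq_bigr => j _; rewrite scalerAl.
rewrite (bigD1 i) //= eqxx mulr1 big1 ?addr0 // => j; rewrite eq_sym => /negbTE ->.
by rewrite mulr0 scaler0.
Qed.

Lemma EEMX a (F : TP) (i : 'I_4) :
  EE a (F * 'X_i) = EE a F * 'X_i + a i *: (dlt a F + EE a F).
Proof.
rewrite /EE tauM tauX dltMX -!mul_mpolyC.
set t := tau a F; set d := dlt a F.
ring.
Qed.


Lemma shiftE a b c d F : shift a b c d F = tau (sh a b c d) F.
Proof.
rewrite /shift /tau.
have -> : [tuple vX + a%:MP; vY + b%:MP; vS + c%:MP; vT + d%:MP] = lq (sh a b c d).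
  apply: eq_from_tnth => i.
  rewrite tnth_mktuple /sh (tnth_nth 0).
  case: i => [[|[|[|[|k]]]] Hi].
  - change (vX + a%:MP = 'X_(Ordinal Hi) + a%:MP).
    rewrite /vX; have ->: (@inord 3 0) = Ordinal Hi by apply: val_inj; rewrite /= inordK.
    by [].
  - change (vY + b%:MP = 'X_(Ordinal Hi) + b%:MP).
    rewrite /vY; have ->: (@inord 3 1) = Ordinal Hi by apply: val_inj; rewrite /= inordK.
    by [].
  - change (vS + c%:MP = 'X_(Ordinal Hi) + c%:MP).
    rewrite /vS; have ->: (@inord 3 2) = Ordinal Hi by apply: val_inj; rewrite /= inordK.
    by [].
  - change (vT + d%:MP = 'X_(Ordinal Hi) + d%:MP).
    rewrite /vT; have ->: (@inord 3 3) = Ordinal Hi by apply: val_inj; rewrite /= inordK.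
    by [].
  - by [].
by [].
Qed.


Lemma msize_le_coef (p : TP) k :
  (forall m, (k <= mdeg m)%N -> p@_m = 0) -> (msize p <= k)%N.
Proof.
move=> Hp; rewrite msizeE big_seq; elim/big_ind: _ => //.
  by move=> x y; rewrite geq_max => -> ->.
move=> m Hm; rewrite ltnNge; apply/negP => H.
by move: Hm; rewrite mcoeff_msupp Hp // eqxx.
Qed.

Lemma msize_sum_le (I : Type) (r : seq I) (P : pred I) (F : I -> TP) k :
  (forall i, P i -> (msize (F i) <= k)%N) -> (msize (\sum_(i <- r | P i) F i) <= k)%N.
Proof.
move=> H; elim/big_ind: _ => //; first by rewrite msize0.
by move=> x y Hx Hy; apply: leq_trans (msizeD_le _ _) _; rewrite geq_max Hx Hy.
Qed.

Lemma msize_mderiv (F : TP) j : (msize (mderiv j F) <= (msize F).-1)%N.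
Proof.
apply: msize_le_coef => m Hm; rewrite mcoeff_mderiv.
rewrite memN_msupp_eq0 ?mul0rn //; apply: msize_mdeg_ge.
move: Hm; rewrite mdegD mdeg1 -!subn1; lia.
Qed.

Lemma msize_dlt a (F : TP) : (msize (dlt a F) <= (msize F).-1)%N.
Proof.
apply: msize_sum_le => j _; apply: leq_trans (msizeZ_le _ _) _.
exact: msize_mderiv.
Qed.

Lemma lin4 (x y z w u v : TP) : x + y - (z + w) - (u + v) = (x - z - u) + (y - w - v).
Proof. ring. Qed.

Lemma EE0 a : EE a 0 = 0.
Proof.
rewrite /EE /tau comp_mpoly0 /dlt big1 ?subrr // => j _.
by rewrite mderiv0 scaler0.
Qed.

Lemma EED a (p q : TP) : EE a (p + q) = EE a p + EE a q.
Proof.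
rewrite /EE /tau comp_mpolyD /dlt.
under eq_bigr => j _ do rewrite mderivD scalerDr.
rewrite big_split /=.
exact: lin4.
Qed.

Lemma EEZ a c (p : TP) : EE a (c *: p) = c *: EE a p.
Proof.
rewrite /EE /tau comp_mpolyZ /dlt.
under eq_bigr => j _ do rewrite mderivZ scalerA mulrC -scalerA.
by rewrite -scaler_sumr !scalerBr.
Qed.

Lemma EE1 a : EE a 1 = 0.
Proof.
rewrite /EE /tau comp_mpoly1 /dlt big1 ?subrr ?subr0 // => j _.
by rewrite -mpolyC1 mderivC scaler0.
Qed.

Lemma EE_mono a d (m : 'X_{1..4}) : mdeg m = d -> (msize (EE a 'X_[m]) <= d.-1)%N.
Proof.
elim: d m => [|d IH] m Hm.
  move/eqP: Hm; rewrite mdeg_eq0 => /eqP ->.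
  by rewrite mpolyX0 EE1 msize0.
have [i Hi] : exists i, m i != 0%N.
  case: (pickP (fun i => m i != 0%N)) => [i Hi|H]; first by exists i.
  have m0 : m = 0%MM by apply/mnmP => i; move: (H i) => /negbFE/eqP ->; rewrite mnm0E.
  by move: Hm; rewrite m0 mdeg0.
have Hm0 : (m - U_(i) + U_(i))%MM = m by apply: submK; rewrite lep1mP.
have Hd : mdeg (m - U_(i))%MM = d.
  by move: Hm; rewrite -{1}Hm0 mdegD mdeg1 addn1 => -[].
rewrite -Hm0 mpolyXD EEMX.
apply: leq_trans (msizeD_le _ _) _; rewrite geq_max; apply/andP; split.
  have [->|nz] := eqVneq (EE a 'X_[m - U_(i)]) 0; first by rewrite mul0r msize0.
  have H1 := IH _ Hd.
  have H2 : (0 < msize (EE a 'X_[m - U_(i)]))%N by rewrite lt0n msize_poly_eq0.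
  have H3 : ((msize (EE a 'X_[m - U_(i)]) + 2).-1 <= d)%N.
    by move: H1 H2; rewrite -!subn1; lia.
  rewrite msizeM // ?msizeX ?mdeg1 /=; first exact: H3.
  by rewrite -msize_poly_eq0 msizeX.
apply: leq_trans (msizeZ_le _ _) _.
apply: leq_trans (msizeD_le _ _) _; rewrite geq_max; apply/andP; split.
  by apply: leq_trans (msize_dlt _ _) _; rewrite msizeX Hd.
by apply: leq_trans (IH _ Hd) _; rewrite -!subn1; lia.
Qed.

Lemma EE_bound a (F : TP) : (msize (EE a F) <= (msize F).-2)%N.
Proof.
rewrite {1}(mpolyE F).
rewrite (big_morph (EE a) (EED a) (EE0 a)) big_seq.
apply: msize_sum_le => m Hm.
rewrite EEZ; apply: leq_trans (msizeZ_le _ _) _.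
apply: leq_trans (EE_mono a (erefl _)) _.
have := msize_mdeg_lt Hm; rewrite -!subn1; lia.
Qed.

Lemma tau_sub a (F : TP) : tau a F - F = dlt a F + EE a F.
Proof. by rewrite /EE [RHS]addrC subrK. Qed.

Lemma msize_tau_sub a (F : TP) : (msize (tau a F - F) <= (msize F).-1)%N.
Proof.
rewrite tau_sub; apply: leq_trans (msizeD_le _ _) _; rewrite geq_max msize_dlt /=.
apply: leq_trans (EE_bound a F) _; rewrite -!subn1; lia.
Qed.

Lemma dlt_coef a (F : TP) m :
  (dlt a F)@_m = \sum_(j < 4) a j * (F@_(m + U_(j)) *+ (m j).+1).
Proof.
rewrite /dlt raddf_sum; apply: eq_bigr => j _.
by rewrite -mcoeff_mderiv -mcoeffZ.
Qed.


Definition o0 : 'I_4 := @Ordinal 4 0 isT.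
Definition o1 : 'I_4 := @Ordinal 4 1 isT.
Definition o2 : 'I_4 := @Ordinal 4 2 isT.
Definition o3 : 'I_4 := @Ordinal 4 3 isT.

Lemma sum4 (f : 'I_4 -> CC) : \sum_(j < 4) f j = f o0 + f o1 + f o2 + f o3.
Proof.
rewrite !big_ord_recl big_ord0 addr0 !addrA.
by congr (_ + _ + _ + _); congr f; apply: val_inj.
Qed.

Lemma all4 (P : 'I_4 -> Prop) : P o0 -> P o1 -> P o2 -> P o3 -> forall j, P j.
Proof.
move=> H0 H1 H2 H3 [[|[|[|[|k]]]] Hk] //.
- by have -> : Ordinal Hk = o0 by apply: val_inj.
- by have -> : Ordinal Hk = o1 by apply: val_inj.
- by have -> : Ordinal Hk = o2 by apply: val_inj.
- by have -> : Ordinal Hk = o3 by apply: val_inj.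
Qed.

Lemma sh0 a b c d : sh a b c d o0 = a. Proof. by []. Qed.
Lemma sh1 a b c d : sh a b c d o1 = b. Proof. by []. Qed.
Lemma sh2 a b c d : sh a b c d o2 = c. Proof. by []. Qed.
Lemma sh3 a b c d : sh a b c d o3 = d. Proof. by []. Qed.

Definition a1 := sh (-1) 0 0 0.
Definition a2 := sh (-1) (-1) 0 0.
Definition a3 := sh 0 0 1 0.
Definition a4 := sh 0 0 1 (-1).

Lemma four_eqs (c : 'I_4 -> CC) :
  \sum_j a1 j * c j = 0 -> \sum_j a2 j * c j = 0 ->
  \sum_j a3 j * c j = 0 -> \sum_j a4 j * c j = 0 -> forall j, c j = 0.
Proof.
rewrite /a1 /a2 /a3 /a4 !sum4 !sh0 !sh1 !sh2 !sh3 !mul0r !mul1r !mulN1r !addr0 !add0r.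
move=> /eqP; rewrite oppr_eq0 => /eqP e0.
rewrite e0 oppr0 add0r => /eqP; rewrite oppr_eq0 => /eqP e1.
move=> e2; rewrite e2 add0r => /eqP; rewrite oppr_eq0 => /eqP e3.
by apply: all4.
Qed.

Lemma invariant_false (F : TP) : F != 0 -> (2 <= msize F)%N ->
  tau a1 F = F -> tau a2 F = F -> tau a3 F = F -> tau a4 F = F -> False.
Proof.
move=> nzF szF h1 h2 h3 h4.
have key : forall a, tau a F = F -> forall m, mdeg m = (msize F).-2 ->
    \sum_j a j * (F@_(m + U_(j)) *+ (m j).+1) = 0.
  move=> a ha m hm; rewrite -dlt_coef.
  have e : dlt a F = - EE a F by apply/eqP; rewrite -addr_eq0 -tau_sub ha subrr.
  apply: memN_msupp_eq0; apply: msize_mdeg_ge.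
  by rewrite e msizeN hm EE_bound.
have zero : forall m, mdeg m = (msize F).-2 -> forall j, F@_(m + U_(j)) = 0.
  move=> m hm j; apply/eqP.
  have := four_eqs (key _ h1 _ hm) (key _ h2 _ hm) (key _ h3 _ hm) (key _ h4 _ hm) j.
  by move/eqP; rewrite mulrn_eq0.
set M := mlead F.
have hM : (mdeg M).+1 = msize F by rewrite mlead_deg.
have [j Hj] : exists j, M j != 0%N.
  case: (pickP (fun i => M i != 0%N)) => [i Hi|H]; first by exists i.
  have m0 : M = 0%MM by apply/mnmP => i; move: (H i) => /negbFE/eqP ->; rewrite mnm0E.
  by move: hM szF; rewrite m0 mdeg0 => <-.
have HM0 : (M - U_(j) + U_(j))%MM = M by apply: submK; rewrite lep1mP.
have Hd : mdeg (M - U_(j))%MM = (msize F).-2.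
  by move: hM; rewrite -{1}HM0 mdegD mdeg1 addn1 => <-.
have := zero _ Hd j; rewrite HM0 => /eqP.
by rewrite mleadc_eq0 (negbTE nzF).
Qed.


Theorem lemma3p1 (l1 l2 s1 s2 e1 e2 : CC) (V : TP -> Prop) :
  l1 != 0 -> l2 != 0 -> s1 != 0 -> s2 != 0 ->
  is_submodule l1 e1 s1 l2 e2 s2 V ->
  (exists v, V v /\ v != 0) ->
  V 1.
Proof.
move=> nl1 nl2 ns1 ns2 [[V0 VD VZ] [VL VH VI VJ]] [v [Vv nzv]].
have Vsub : forall u w, V u -> V w -> V (u - w).
  by move=> u w Vu Vw; rewrite -scaleN1r; apply: VD => //; apply: VZ.
have z0 : zc 0 = 0 by rewrite /zc mulr0z.
have z1 : zc 1 = 1 by rewrite /zc mulr1z.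
have Vsc : forall (c : CC) F, c != 0 -> V (c *: F + 0) -> V F.
  move=> c F nc H; have := VZ c^-1 _ H.
  by rewrite addr0 scalerA mulVf // scale1r.
have T1 : forall F, V F -> V (tau a1 F - F).
  move=> F VF; apply: Vsub => //; apply: (@Vsc (l1 ^ 0 * s1)).
    by rewrite expr0z mul1r.
  have := VI 0 F VF; rewrite /actI shiftE z0 oppr0 //.
have T2 : forall F, V F -> V (tau a2 F - F).
  move=> F VF; apply: Vsub => //; apply: (@Vsc (l1 ^ 1 * s1)).
    by rewrite expr1z mulf_neq0.
  have := VI 1 F VF; rewrite /actI shiftE z1 //.
have T3 : forall F, V F -> V (tau a3 F - F).
  move=> F VF; apply: Vsub => //; apply: (@Vsc (l2 ^ 0 * s2)).
    by rewrite expr0z mul1r.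
  have := VJ 0 F VF; rewrite /actJ shiftE z0 oppr0 add0r -[X in V X]addr0 //.
have T4 : forall F, V F -> V (tau a4 F - F).
  move=> F VF; apply: Vsub => //; apply: (@Vsc (l2 ^ 1 * s2)).
    by rewrite expr1z mulf_neq0.
  have := VJ 1 F VF; rewrite /actJ shiftE z1 add0r -[X in V X]addr0 //.
suff : forall k F, (msize F <= k)%N -> V F -> F != 0 -> V 1 by apply; eauto.
elim=> [|k IH] F hs VF nzF.
  by move: hs; rewrite leqn0 msize_poly_eq0 (negbTE nzF).
have [h|h] := leqP (msize F) 1.
  have eF := msize1_polyC h.
  have nc : F@_0 != 0 by apply: contra nzF => /eqP c0; rewrite eF c0.
  have := VZ (F@_0)^-1 _ VF; rewrite {2}eF -mul_mpolyC -mpolyCM mulVf //.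
have step : forall a, (forall F, V F -> V (tau a F - F)) -> tau a F != F -> V 1.
  move=> a Ta ne; apply: (IH (tau a F - F)); last by rewrite subr_eq0.
    by apply: leq_trans (msize_tau_sub a F) _; rewrite -ltnS prednK // (leq_trans _ h).
  exact: Ta.
have [e1'|] := eqVneq (tau a1 F) F; last exact: step.
have [e2'|] := eqVneq (tau a2 F) F; last exact: step.
have [e3'|] := eqVneq (tau a3 F) F; last exact: step.
have [e4'|] := eqVneq (tau a4 F) F; last exact: step.
by case: (invariant_false nzF h e1' e2' e3' e4').
Qed.
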